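(* Let $P\subseteq[0,k]^n$ be a lattice polytope of dimension $d$. Let $\sigma:[n]\to\pm[n]$ be any signed permutation, let $\alpha\ge 2k+1$, and let \[\mathbf{x}_\sigma=(\operatorname{sign}(\sigma(1))\alpha^{|\sigma(1)|},\dots,\operatorname{sign}(\sigma(n))\alpha^{|\sigma(n)|}).\] Let $\mathbf{v}$ be a vertex of $P$ maximizing $\mathbf{x}_\sigma^{\intercal}\mathbf{x}$ over $P$. Then for any $\mathbf{c}\in\mathbb{R}^n$, the shortest $\mathbf{c}$-monotone path from $\mathbf{v}$ to a $\mathbf{c}$-maximal vertex of $P$ has length at most $dk$.
   Context: A signed permutation $\sigma:[n]\to\pm[n]=\{\pm1,\dots,\pm n\}$ is a map such that $i\mapsto|\sigma(i)|$ is a permutation of $[n]$. A lattice polytope has integer vertices. A $\mathbf{c}$-monotone path is a sequence of vertices of $P$ in which consecutive vertices are joined by an edge of $P$ and $\mathbf{c}^{\intercal}\mathbf{x}$ strictly increases; its length is its number of edges. *)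

(* Defs.v *)
From HB Require Import structures.
From mathcomp Require Import all_boot all_order all_algebra all_fingroup.
Set Implicit Arguments. Unset Strict Implicit. Unset Printing Implicit Defensive.
Import Order.TTheory GRing.Theory Num.Theory.
Local Open Scope ring_scope.

Section Polytopes.
Variables (R : realFieldType) (n : nat).

Definition dotv (c x : 'rV[R]_n) : R := \sum_(i < n) c 0 i * x 0 i.

Definition conv_hull (S : seq 'rV[R]_n) (x : 'rV[R]_n) : Prop :=
  exists w : 'I_(size S) -> R,
    (forall i, 0 <= w i) /\ \sum_i w i = 1 /\ x = \sum_i w i *: S`_i.

Definition lattice_in_box (k : nat) (S : seq 'rV[R]_n) : Prop :=
  forall x, x \in S -> forall j : 'I_n, exists m : nat, (m <= k)%N /\ x 0 j = m%:R.

Definition maximizer (P : 'rV[R]_n -> Prop) (c x : 'rV[R]_n) : Prop :=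
  P x /\ forall y, P y -> dotv c y <= dotv c x.

Definition is_vertex (P : 'rV[R]_n -> Prop) (v : 'rV[R]_n) : Prop :=
  exists c, forall x, maximizer P c x <-> x = v.

Definition is_edge (P : 'rV[R]_n -> Prop) (u w : 'rV[R]_n) : Prop :=
  u <> w /\ exists c, forall x, maximizer P c x <->
    exists t : R, 0 <= t <= 1 /\ x = (1 - t) *: u + t *: w.

Definition aff_indep (m : nat) (p : 'I_m.+1 -> 'rV[R]_n) : bool :=
  row_free (\matrix_(i < m, j < n) (p (lift ord0 i) - p ord0) 0 j).

Definition polytope_dim (P : 'rV[R]_n -> Prop) (d : nat) : Prop :=
  (exists p : 'I_d.+1 -> 'rV[R]_n, (forall i, P (p i)) /\ aff_indep p) /\
  (forall p : 'I_d.+2 -> 'rV[R]_n, (forall i, P (p i)) -> ~~ aff_indep p).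

(* x_sigma for the signed permutation sigma(i) = (-1)^(sg i) * (s i + 1) *)
Definition xsigma (alpha : R) (s : {perm 'I_n}) (sg : 'I_n -> bool) : 'rV[R]_n :=
  \row_i ((-1) ^+ sg i * alpha ^+ (s i).+1).

(* q is a c-monotone path of P (a sequence of vertices joined by edges,
   with c^T x strictly increasing); its length is (size q).-1 *)
Definition c_monotone_path (P : 'rV[R]_n -> Prop) (c : 'rV[R]_n)
  (q : seq 'rV[R]_n) : Prop :=
  forall i, (i.+1 < size q)%N ->
    is_edge P (nth 0 q i) (nth 0 q i.+1) /\ dotv c (nth 0 q i) < dotv c (nth 0 q i.+1).

End Polytopes.

(* Main.v *)
Require Import Defs.
From HB Require Import structures.
From mathcomp Require Import all_boot all_order all_algebra all_fingroup.
From mathcomp Require Import ring lra.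
From Stdlib Require Import Classical.
Import Order.TTheory GRing.Theory Num.Theory.
Local Open Scope ring_scope.
Set Implicit Arguments. Unset Strict Implicit. Unset Printing Implicit Defensive.


Section Basics.
Variables (R : realFieldType) (n : nat).
Implicit Types (f g h x y u w : 'rV[R]_n) (S : seq 'rV[R]_n).

Lemma dotvDr f x y : dotv f (x + y) = dotv f x + dotv f y.
Proof. by rewrite /dotv -big_split; apply: eq_bigr => i _; rewrite mxE mulrDr. Qed.
Lemma dotvZr f a x : dotv f (a *: x) = a * dotv f x.
Proof. by rewrite /dotv mulr_sumr; apply: eq_bigr => i _; rewrite mxE mulrCA. Qed.
Lemma dotvNr f x : dotv f (- x) = - dotv f x.
Proof. by rewrite -scaleN1r dotvZr mulN1r. Qed.
Lemma dotvBr f x y : dotv f (x - y) = dotv f x - dotv f y.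
Proof. by rewrite dotvDr dotvNr. Qed.
Lemma dotv0r f : dotv f 0 = 0.
Proof. by rewrite -(scale0r 0) dotvZr mul0r. Qed.
Lemma dotvDl f g x : dotv (f + g) x = dotv f x + dotv g x.
Proof. by rewrite /dotv -big_split; apply: eq_bigr => i _; rewrite mxE mulrDl. Qed.
Lemma dotvZl a f x : dotv (a *: f) x = a * dotv f x.
Proof. by rewrite /dotv mulr_sumr; apply: eq_bigr => i _; rewrite mxE mulrA. Qed.
Lemma dotvNl f x : dotv (- f) x = - dotv f x.
Proof. by rewrite -scaleN1r dotvZl mulN1r. Qed.
Lemma dotv_sumr f (I : finType) (F : I -> 'rV[R]_n) :
  dotv f (\sum_i F i) = \sum_i dotv f (F i).
Proof. exact: (big_morph (dotv f) (dotvDr f) (dotv0r f)). Qed.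

Definition ev (j : 'I_n) (a : R) : 'rV[R]_n := \row_l (if l == j then a else 0).
Lemma dotv_ev j a x : dotv (ev j a) x = a * x 0 j.
Proof.
rewrite /dotv (bigD1 j) //= big1 ?addr0 ?mxE ?eqxx //.
by move=> i /negbTE ij; rewrite mxE ij mul0r.
Qed.

Lemma sum_delta m (a : 'I_m) (F : 'I_m -> 'rV[R]_n) :
  \sum_i (if i == a then F i else 0) = F a.
Proof.
rewrite (bigD1 a) //= eqxx big1 ?addr0 //.
by move=> i /negbTE ->.
Qed.
Lemma sum_deltaR m (a : 'I_m) (F : 'I_m -> R) :
  \sum_i (if i == a then F i else 0) = F a.
Proof.
rewrite (bigD1 a) //= eqxx big1 ?addr0 //.
by move=> i /negbTE ->.
Qed.

Lemma conv2 S u w t : u \in S -> w \in S -> 0 <= t <= 1 ->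
  conv_hull S ((1 - t) *: u + t *: w).
Proof.
move=> uS wS /andP[t0 t1].
pose iu := Ordinal (etrans (index_mem u S) uS).
pose iw := Ordinal (etrans (index_mem w S) wS).
exists (fun i => (if i == iu then 1 - t else 0) + (if i == iw then t else 0)).
split; [|split].
- move=> i; apply: addr_ge0; case: ifP => // _; lra.
- by rewrite big_split /= !sum_deltaR; lra.
- under eq_bigr do rewrite scalerDl.
  rewrite big_split /=.
  have E (a : 'I_(size S)) (c : R) : \sum_i (if i == a then c else 0) *: S`_i = c *: S`_a.
    rewrite -(sum_delta a (fun i => c *: S`_i)); apply: eq_bigr => i _.
    by case: ifP => _; rewrite ?scale0r.
  by rewrite !E /= !nth_index.
Qed.

Lemma mem_conv S u : u \in S -> conv_hull S u.
Proof.
move=> uS; have := conv2 uS uS (t:=0); rewrite subr0 scale1r scale0r addr0.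
by apply; rewrite lexx ler01.
Qed.

Lemma conv_le S f m x : (forall s, s \in S -> dotv f s <= m) -> conv_hull S x ->
  dotv f x <= m.
Proof.
move=> H [w [w0 [w1 ->]]].
rewrite dotv_sumr.
have -> : m = \sum_i w i * m by rewrite -mulr_suml w1 mul1r.
apply: ler_sum => i _; rewrite dotvZr ler_wpM2l //.
by apply: H; apply: mem_nth.
Qed.

Lemma conv_eq S f m (w : 'I_(size S) -> R) :
  (forall s, s \in S -> dotv f s <= m) -> (forall i, 0 <= w i) -> \sum_i w i = 1 ->
  m <= dotv f (\sum_i w i *: S`_i) -> forall i, 0 < w i -> dotv f S`_i = m.
Proof.
move=> H w0 w1 le i wi.
have HS (i0 : 'I_(size S)) : dotv f S`_i0 <= m by apply: H; apply: mem_nth.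
have E : \sum_i0 w i0 * (m - dotv f S`_i0) = 0.
  apply/eqP; rewrite eq_le; apply/andP; split; last first.
    by apply: sumr_ge0 => j _; apply: mulr_ge0 => //; rewrite subr_ge0.
  under eq_bigr do rewrite mulrBr.
  rewrite sumrB -mulr_suml w1 mul1r subr_le0.
  by move: le; rewrite dotv_sumr; under eq_bigr do rewrite dotvZr.
have Hge : forall j : 'I_(size S), predT j -> 0 <= w j * (m - dotv f S`_j).
  by move=> j _; apply: mulr_ge0 => //; rewrite subr_ge0.
have := @psumr_eq0P _ _ predT (fun i0 => w i0 * (m - dotv f S`_i0)) Hge E i isT.
move/eqP; rewrite mulf_eq0 subr_eq0 (gt_eqF wi) /= eq_sym.
by move/eqP.
Qed.

End Basics.


Section Faces.
Variables (R : realFieldType) (n : nat).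
Implicit Types (f g h x y u w v : 'rV[R]_n) (S : seq 'rV[R]_n).

Definition expo S g v := v \in S /\ forall s, s \in S -> s != v -> dotv g s < dotv g v.

Lemma conv_repr S x : conv_hull S x -> exists w : 'I_(size S) -> R,
  [/\ forall i, 0 <= w i, \sum_i w i = 1 & x = \sum_i w i *: S`_i].
Proof. by move=> [w [? [? ?]]]; exists w. Qed.

Lemma expo_vertex S g v : expo S g v -> is_vertex (conv_hull S) v.
Proof.
move=> [vS Hv]; exists g => x; split.
- move=> [Px Hmax]; have [w [w0 w1 xE]] := conv_repr Px.
  have Hle : forall s, s \in S -> dotv g s <= dotv g v.
    by move=> s sS; case: (eqVneq s v) => [->//|sv]; apply/ltW/Hv.
  have Hge : dotv g v <= dotv g x by apply: Hmax; apply: mem_conv.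
  rewrite xE in Hge.
  have Heq := conv_eq Hle w0 w1 Hge.
  rewrite xE.
  have E : forall i, w i *: S`_i = w i *: v.
    move=> i; have := w0 i; rewrite le_eqVlt => /orP[/eqP <-|wi]; first by rewrite !scale0r.
    have := Heq i wi; case: (eqVneq S`_i v) => [->//|ne].
    by have := Hv _ (mem_nth 0 (ltn_ord i)) ne => /[swap] -> ; rewrite ltxx.
  by under eq_bigr do rewrite E; rewrite -scaler_suml w1 scale1r.
- move=> ->; split; first exact: mem_conv.
  move=> y; apply: conv_le => s sS.
  by case: (eqVneq s v) => [->//|sv]; apply/ltW/Hv.
Qed.

Lemma vertex_expo S v : is_vertex (conv_hull S) v -> exists g, expo S g v.
Proof.
move=> [c Hc]; exists c.
have [Pv Hmax] := (proj2 (Hc v) erefl).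
have Hle : forall s, s \in S -> dotv c s <= dotv c v.
  by move=> s sS; apply: Hmax; apply: mem_conv.
have vS : v \in S.
  have [w [w0 w1 vE]] := conv_repr Pv.
  have Hge : dotv c v <= dotv c (\sum_i w i *: S`_i) by rewrite -vE.
  have Heq := conv_eq Hle w0 w1 Hge.
  have [i wi] : exists i, 0 < w i.
    apply/existsP; apply: contraT; rewrite negb_exists => /forallP H.
    have : \sum_i w i <= 0 by apply: sumr_le0 => i _; rewrite leNgt H.
    by rewrite w1 ler10.
  have Si : maximizer (conv_hull S) c S`_i.
    split; first by apply: mem_conv; apply: mem_nth.
    by move=> y Py; rewrite Heq //; apply: Hmax.
  by rewrite -((Hc _).1 Si); apply: mem_nth.
split=> // s sS sv.
rewrite lt_neqAle Hle // andbT; apply/negP => /eqP E.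
move/negP: sv; apply; apply/eqP; apply/(Hc s).1.
split; first exact: mem_conv.
by move=> y Py; rewrite E; apply: Hmax.
Qed.

Lemma edge_of S f u w : u != w -> u \in S -> w \in S ->
  (forall s, s \in S -> dotv f s <= dotv f u) -> dotv f w = dotv f u ->
  (forall s, s \in S -> dotv f s = dotv f u -> exists t, 0 <= t <= 1 /\ s = (1 - t) *: u + t *: w) ->
  is_edge (conv_hull S) u w.
Proof.
move=> uw uS wS Hle Hw Hseg; split; first by apply/eqP.
exists f => x; split.
- move=> [Px Hmax]; have [a [a0 a1 xE]] := conv_repr Px.
  have Hge : dotv f u <= dotv f (\sum_i a i *: S`_i) by rewrite -xE; apply: Hmax; apply: mem_conv.
  have Heq := conv_eq Hle a0 a1 Hge.
  have : forall i, exists t, 0 <= t <= 1 /\ a i *: S`_i = a i *: ((1 - t) *: u + t *: w).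
    move=> i; have := a0 i; rewrite le_eqVlt => /orP[/eqP <-|ai].
      by exists 0; rewrite lexx ler01 !scale0r.
    have [t [t01 tE]] := Hseg _ (mem_nth 0 (ltn_ord i)) (Heq i ai).
    by exists t; rewrite -tE.
  move/fin_all_exists => [t Ht].
  exists (\sum_i a i * t i); split.
    apply/andP; split; first by apply: sumr_ge0 => i _; apply: mulr_ge0 => //; case/andP: (Ht i).1.
    rewrite -a1; apply: ler_sum => i _; rewrite -{2}(mulr1 (a i)); apply: ler_wpM2l => //.
    by case/andP: (Ht i).1.
  rewrite xE; under eq_bigr do rewrite (Ht _).2.
  under eq_bigr do rewrite scalerDr !scalerA.
  rewrite big_split /= -!scaler_suml; congr (_ *: _ + _).
  by rewrite -{2}a1 -sumrB; apply: eq_bigr => i _; ring.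
- move=> [t [t01 ->]]; split; first exact: conv2.
  move=> y; apply: conv_le => s sS; rewrite dotvDr !dotvZr Hw.
  have := Hle s sS; lra.
Qed.

End Faces.


Section Tools.
Variables (R : realFieldType) (n : nat).
Implicit Types (f g h x y u w v : 'rV[R]_n) (X S : seq 'rV[R]_n).

Lemma exists_max X (F : 'rV[R]_n -> R) : X != [::] ->
  exists2 x, x \in X & forall y, y \in X -> F y <= F x.
Proof.
elim: X => // a X IH _.
case: (eqVneq X [::]) => [->|XX].
  by exists a; rewrite ?mem_seq1 // => y; rewrite mem_seq1 => /eqP ->.
have [x xX Hx] := IH XX.
case: (leP (F a) (F x)) => H.
  exists x; first by rewrite inE xX orbT.
  by move=> y; rewrite inE => /orP[/eqP ->|/Hx].
exists a; first by rewrite inE eqxx.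
move=> y; rewrite inE => /orP[/eqP ->//|/Hx]; move: H; lra.
Qed.

Lemma exists_bound X (F : 'rV[R]_n -> R) :
  exists M, 0 < M /\ forall y, y \in X -> F y < M.
Proof.
elim: X => [|a X [M [M0 HM]]]; first by exists 1; split.
exists (M + `|F a| + 1); split; first by have := normr_ge0 (F a); lra.
move=> y; rewrite inE => /orP[/eqP ->|/HM].
  by have := ler_norm (F a); lra.
by have := normr_ge0 (F a); lra.
Qed.

Lemma combine X (F G : 'rV[R]_n -> R) : exists M, 0 < M /\ forall x, x \in X ->
 ((forall y, y \in X -> G y + M * F y <= G x + M * F x) <->
  ((forall y, y \in X -> F y <= F x) /\
    forall y, y \in X -> (forall z, z \in X -> F z <= F y) -> G y <= G x)).
Proof.
case: (eqVneq X [::]) => [->|XX]; first by exists 1; split.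
have [xh xhX Hxh] := exists_max F XX.
pose Xh := [seq y <- X | F y == F xh].
have xhXh : xh \in Xh by rewrite mem_filter eqxx xhX.
have XhX : Xh != [::] by apply/eqP => E; rewrite E in xhXh.
have [xg xgX Hxg] := exists_max G XhX.
move: xgX; rewrite mem_filter => /andP[/eqP Fxg xgX].
have [M [M0 HM]] := exists_bound X (fun y => (G y - G xg) / (F xh - F y)).
exists M; split => // x xX; split.
- move=> Hx.
  have Fx : F x = F xh.
    apply/eqP; rewrite eq_le Hxh //=; rewrite leNgt; apply/negP => lt.
    have := Hx _ xgX; rewrite Fxg => H1.
    have := HM _ xX; rewrite /= ltr_pdivrMr ?subr_gt0 // => H2.
    have : M * (F xh - F x) <= G x - G xg by lra.
    by rewrite mulrC; lra.
  split; first by move=> y yX; rewrite Fx; apply: Hxh.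
  move=> y yX Hy; have := Hx _ yX.
  have Fy : F y = F xh by apply/eqP; rewrite eq_le Hxh // Hy.
  by rewrite Fy Fx; lra.
- move=> [Hx1 Hx2].
  have Fx : F x = F xh by apply/eqP; rewrite eq_le Hxh // Hx1.
  have Gx : G x = G xg.
    have a : G xg <= G x by apply: Hx2 => // z zX; rewrite Fxg; apply: Hxh.
    have b : G x <= G xg by apply: Hxg; rewrite mem_filter Fx eqxx.
    by apply/eqP; rewrite eq_le a b.
  move=> y yX.
  have := Hxh _ yX; rewrite le_eqVlt => /orP[/eqP Fy|lt].
    have : G y <= G x by apply: Hx2 => // z zX; rewrite Fy; apply: Hxh.
    by rewrite Fx Fy; lra.
  have := HM _ yX; rewrite /= ltr_pdivrMr ?subr_gt0 // => H2.
  rewrite Fx Gx; move: H2; rewrite mulrC; lra.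
Qed.

Lemma combinev X h g : exists M, 0 < M /\ forall x, x \in X ->
 ((forall y, y \in X -> dotv (g + M *: h) y <= dotv (g + M *: h) x) <->
  ((forall y, y \in X -> dotv h y <= dotv h x) /\
    forall y, y \in X -> (forall z, z \in X -> dotv h z <= dotv h y) -> dotv g y <= dotv g x)).
Proof.
have [M [M0 HM]] := combine X (dotv h) (dotv g).
exists M; split => // x xX; rewrite -HM //.
by split => H y yX; have := H y yX; rewrite !dotvDl !dotvZl.
Qed.

Lemma lexpick X f : X != [::] -> exists phi p, [/\ p \in X,
  (forall y, y \in X -> dotv f y <= dotv f p),
  (forall y, y \in X -> dotv phi y <= dotv phi p) &
  forall q, q \in X -> (forall y, y \in X -> dotv phi y <= dotv phi q) -> q = p].
Proof.
move=> XX.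
have key : forall m, (m <= n)%N -> exists phi,
  (forall q, q \in X -> (forall y, y \in X -> dotv phi y <= dotv phi q) ->
     forall y, y \in X -> dotv f y <= dotv f q) /\
  (forall q q', q \in X -> q' \in X ->
     (forall y, y \in X -> dotv phi y <= dotv phi q) ->
     (forall y, y \in X -> dotv phi y <= dotv phi q') ->
     forall j : 'I_n, (j < m)%N -> q 0 j = q' 0 j).
  elim=> [|m IH] mn.
    by exists f; split => // q q' _ _ _ _ j.
  have [phi [H1 H2]] := IH (ltnW mn).
  pose j0 := Ordinal mn.
  have [M [M0 HM]] := combinev X phi (ev j0 1).
  exists (ev j0 1 + M *: phi); split.
    by move=> q qX /(HM q qX) [Hq _]; apply: H1.
  move=> q q' qX q'X /(HM q qX) [Hq Hq2] /(HM q' q'X) [Hq' Hq'2] j.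
  rewrite ltnS leq_eqVlt => /orP[/eqP jE|jm]; last exact: H2.
  have E : j = j0 by apply: val_inj.
  have := Hq2 _ q'X Hq'; have := Hq'2 _ qX Hq.
  by rewrite E !dotv_ev !mul1r => a b; apply/eqP; rewrite eq_le a b.
have [phi [H1 H2]] := key n (leqnn n).
have [p pX Hp] := exists_max (dotv phi) XX.
exists phi, p; split => //; first exact: H1.
move=> q qX Hq; apply/rowP => j.
by apply: H2 => //; apply: ltn_ord.
Qed.

End Tools.


Section Improve.
Variables (R : realFieldType) (n : nat).
Implicit Types (f g h x y u w v : 'rV[R]_n) (X S : seq 'rV[R]_n).

Lemma improve S h g f u s0 :
  u \in S -> (forall y, y \in S -> dotv h y <= dotv h u) ->
  (forall s, s \in S -> s != u -> dotv g s < dotv g u) ->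
  s0 \in S -> (forall y, y \in S -> dotv h y <= dotv h s0) -> dotv f u < dotv f s0 ->
  exists w, [/\ w \in S, (forall y, y \in S -> dotv h y <= dotv h w),
     dotv f u < dotv f w, is_edge (conv_hull S) u w & exists g', expo S g' w].
Proof.
move=> uS hu gu s0S hs0 fs0.
pose hm s := all (fun y => dotv h y <= dotv h s) S.
have hmP s : reflect (forall y, y \in S -> dotv h y <= dotv h s) (hm s).
  exact: allP.
pose T := [seq s <- S | (s != u) && hm s].
pose del s := dotv g u - dotv g s.
pose p s := (del s)^-1 *: (s - u).
pose Y := map p T.
have s0u : s0 != u by apply/eqP => E; move: fs0; rewrite E ltxx.
have s0T : s0 \in T by rewrite mem_filter s0u s0S andbT; apply/hmP.
have ps0Y : p s0 \in Y by apply: map_f.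
have YY : Y != [::] by apply/eqP => E; rewrite E in ps0Y.
have delpos s : s \in S -> s != u -> 0 < del s.
  by move=> sS su; rewrite /del subr_gt0; apply: gu.
have decomp s : s \in S -> s != u -> s = u + del s *: p s.
  move=> sS su; rewrite /p scalerA mulfV; first by rewrite scale1r addrC subrK.
  by apply/lt0r_neq0/delpos.
have [phi [ps [psY Hf Hphi Huniq]]] := lexpick f YY.
have fps : 0 < dotv f ps.
  apply: lt_le_trans (Hf _ ps0Y).
  rewrite /p dotvZr dotvBr; apply: mulr_gt0; first by rewrite invr_gt0; apply: delpos.
  by rewrite subr_gt0.
pose psi := phi + dotv phi ps *: g.
have keypsi s : s \in S -> s != u ->
    dotv psi s - dotv psi u = del s * (dotv phi (p s) - dotv phi ps).
  move=> sS su; rewrite /psi !dotvDl !dotvZl {1}(decomp s sS su) dotvDr dotvZr /del.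
  ring.
have [s1 s1T ps1] : exists2 s1, s1 \in T & ps = p s1 by apply/mapP.
pose Z := [seq s <- T | p s == ps].
have s1Z : s1 \in Z by rewrite mem_filter s1T ps1 eqxx.
have ZZ : Z != [::] by apply/eqP => E; rewrite E in s1Z.
have [sf sfZ Hsf] := exists_max del ZZ.
move: sfZ; rewrite !mem_filter => /andP[/eqP psf /andP[/andP[sfu /hmP hsf] sfS]].
have inZ y : y \in S -> y != u -> hm y -> p y = ps -> del y <= del sf.
  by move=> yS yu hy py; apply: Hsf; rewrite !mem_filter py eqxx yu hy yS.
have [M1 [M10 HM1]] := combinev S h psi.
pose psi1 := psi + M1 *: h.
have psi_le_u y : y \in S -> (forall z, z \in S -> dotv h z <= dotv h y) -> dotv psi y <= dotv psi u.
  move=> yS hy; case: (eqVneq y u) => [->//|yu].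
  rewrite -subr_le0 keypsi //; apply: mulr_ge0_le0; first exact/ltW/delpos.
  rewrite subr_le0; apply: Hphi; apply: map_f.
  by rewrite mem_filter yu yS andbT; apply/hmP.
have umax : forall y, y \in S -> dotv psi1 y <= dotv psi1 u.
  by apply/(HM1 u uS); split => //.
have sfmax : forall y, y \in S -> dotv psi1 y <= dotv psi1 sf.
  apply/(HM1 sf sfS); split => // y yS hy.
  apply: (le_trans (psi_le_u y yS hy)).
  by rewrite -subr_ge0 keypsi // psf subrr mulr0.
have classify s : s \in S -> (forall y, y \in S -> dotv psi1 y <= dotv psi1 s) ->
    s = u \/ [/\ s != u, hm s & p s = ps].
  move=> sS /(HM1 s sS) [hs Hs].
  case: (eqVneq s u) => [->|su]; [by left | right].
  have : dotv psi u <= dotv psi s by apply: Hs.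
  rewrite -subr_ge0 keypsi // pmulr_rge0 ?delpos // subr_ge0 => le.
  split => //; first by apply/hmP.
  apply: Huniq; first by apply: map_f; rewrite mem_filter su sS andbT; apply/hmP.
  move=> y yY; apply: le_trans le; exact: Hphi.
have dsf : 0 < del sf by apply: delpos.
exists sf; split => //.
- by rewrite (decomp sf sfS sfu) dotvDr dotvZr psf ltrDl; apply: mulr_gt0.
- apply: (@edge_of _ _ S psi1) => //.
  + by rewrite eq_sym.
  + by apply/eqP; rewrite eq_le umax // sfmax.
  + move=> s sS E.
    have : s = u \/ [/\ s != u, hm s & p s = ps].
      by apply: classify => // y yS; rewrite E; apply: umax.
    case=> [->|[su hs pse]].
      by exists 0; rewrite lexx ler01 subr0 scale1r scale0r addr0.
    have ds := delpos s sS su.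
    exists (del s / del sf); split.
      apply/andP; split; first by apply: divr_ge0; apply: ltW.
      by rewrite ler_pdivrMr // mul1r; apply: inZ.
    set t := del s / del sf.
    have -> : (1 - t) *: u + t *: sf = u + (t * del sf) *: ps.
      rewrite {1}(decomp sf sfS sfu) psf scalerDr scalerA scalerBl scale1r.
      by rewrite addrA subrK.
    rewrite /t -mulrA mulVf ?mulr1 ?gt_eqF // -pse.
    exact: decomp.
- have [M2 [M20 HM2]] := combinev S psi1 (- g).
  exists (- g + M2 *: psi1); split => //.
  have sfmax2 : forall y, y \in S -> dotv (- g + M2 *: psi1) y <= dotv (- g + M2 *: psi1) sf.
    apply/(HM2 sf sfS); split => // y yS ymax.
    rewrite !dotvNl lerN2.
    case: (classify y yS ymax) => [->|[yu hy py]].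
      by apply/ltW/gu.
    by have := inZ y yS yu hy py; rewrite /del; lra.
  move=> s sS ssf; rewrite lt_neqAle sfmax2 // andbT; apply/negP => /eqP E.
  have : forall y, y \in S -> dotv (- g + M2 *: psi1) y <= dotv (- g + M2 *: psi1) s.
    by move=> y yS; rewrite E; apply: sfmax2.
  move/(HM2 s sS) => [smax Hs].
  have := Hs _ sfS sfmax; rewrite !dotvNl lerN2 => gle.
  case: (classify s sS smax) => [su|[su hs pse]].
    by move: gle dsf; rewrite su /del; lra.
  have : del s = del sf by apply/eqP; rewrite eq_le inZ // /del; lra.
  move=> dE; move/negP: ssf; apply; apply/eqP.
  by rewrite (decomp s sS su) (decomp sf sfS sfu) dE pse psf.
Qed.
End Improve.


Section Descend.
Variables (R : realFieldType) (n : nat).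
Implicit Types (c e f g h x y u w v : 'rV[R]_n) (X S : seq 'rV[R]_n).

Definition hmax S h x := forall y, y \in S -> dotv h y <= dotv h x.
Definition fmax S h (F : 'rV[R]_n -> R) x :=
  hmax S h x /\ forall y, y \in S -> hmax S h y -> F y <= F x.

Lemma path_cons (P : 'rV[R]_n -> Prop) c w w' q :
  is_edge P w w' -> dotv c w < dotv c w' -> c_monotone_path P c (w' :: q) ->
  c_monotone_path P c (w :: w' :: q).
Proof. by move=> E lt H [|i] /= Hi; [split | apply: H]. Qed.

Lemma path_tail (P : 'rV[R]_n -> Prop) c a l :
  c_monotone_path P c (a :: l) -> c_monotone_path P c l.
Proof. by move=> H i Hi; apply: (H i.+1). Qed.

Lemma path_cat (P : 'rV[R]_n -> Prop) c v q1 q2 :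
  c_monotone_path P c (v :: q1) -> c_monotone_path P c (last v q1 :: q2) ->
  c_monotone_path P c (v :: q1 ++ q2).
Proof.
elim: q1 v => [|a q1 IH] v //= H1 H2.
have [E lt] := H1 0%N isT.
apply: path_cons => //; apply: IH => //; exact: path_tail H1.
Qed.

Lemma step S h c e w lam g :
  w \in S -> expo S g w -> fmax S h (dotv (c + lam *: e)) w -> 0 < lam ->
  (exists s, [/\ s \in S, hmax S h s & dotv c w < dotv c s]) ->
  exists w' lam', [/\ w' \in S, (exists g', expo S g' w'),
     fmax S h (dotv (c + lam' *: e)) w', 0 < lam' & [/\ is_edge (conv_hull S) w w',
     dotv c w < dotv c w' & dotv e w' < dotv e w]].
Proof.
move=> wS [_ gw] [hw Hw] lam0 [s [sS hs cs]].
have Hw' y : y \in S -> hmax S h y -> dotv c y - dotv c w <= lam * (dotv e w - dotv e y).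
  by move=> yS hy; have := Hw y yS hy; rewrite !dotvDl !dotvZl; lra.
pose hm y := all (fun z => dotv h z <= dotv h y) S.
have hmP y : reflect (hmax S h y) (hm y) by apply: allP.
pose Lb := [seq y <- S | hm y && (dotv e y < dotv e w)].
pose b y := (dotv c y - dotv c w) / (dotv e w - dotv e y).
have sLb : s \in Lb.
  rewrite mem_filter sS andbT; apply/andP; split; first by apply/hmP.
  have := Hw' s sS hs => H.
  have : 0 < lam * (dotv e w - dotv e s) by lra.
  by rewrite pmulr_rgt0 // subr_gt0.
have LbN : Lb != [::] by apply/eqP => E; rewrite E in sLb.
have [sm smLb Hsm] := exists_max b LbN.
move: smLb; rewrite mem_filter => /andP[/andP[/hmP hsm esm] smS].
have esm' : 0 < dotv e w - dotv e sm by rewrite subr_gt0.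
have bsm_le : b sm <= lam by rewrite /b ler_pdivrMr //; apply: Hw'.
have bsm_pos : 0 < b sm.
  rewrite ltNge; apply/negP => ble.
  have : dotv c s <= dotv c w; last by lra.
  case: (ltP (dotv e s) (dotv e w)) => es.
    have : b s <= 0 by apply: le_trans ble; apply: Hsm.
    by rewrite /b pmulr_lle0 ?invr_gt0 ?subr_gt0 // subr_le0.
  have := Hw' s sS hs; have : lam * (dotv e w - dotv e s) <= 0.
    by apply: mulr_ge0_le0; [apply: ltW | rewrite subr_le0].
  lra.
set lam' := b sm.
have wopt : fmax S h (dotv (c + lam' *: e)) w.
  split => // y yS hy; rewrite !dotvDl !dotvZl.
  case: (ltP (dotv e y) (dotv e w)) => ey.
    have : b y <= lam' by apply: Hsm; rewrite mem_filter /= yS ey !andbT; apply/hmP.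
    rewrite /b ler_pdivrMr ?subr_gt0 // => H; lra.
  have := Hw' y yS hy.
  have : (lam - lam') * (dotv e w - dotv e y) <= 0.
    by apply: mulr_ge0_le0; rewrite ?subr_ge0 ?subr_le0.
  lra.
have smeq : dotv c sm - dotv c w = lam' * (dotv e w - dotv e sm).
  by rewrite /lam' /b mulrAC -mulrA mulfV ?mulr1 // gt_eqF.
have csm : dotv c w < dotv c sm by have := mulr_gt0 bsm_pos esm'; rewrite -/lam'; lra.
have [M [M0 HM]] := combinev S h (c + lam' *: e).
have Hface x : x \in S -> hmax S (c + lam' *: e + M *: h) x <-> fmax S h (dotv (c + lam' *: e)) x.
  by move=> xS; apply: HM.
have smface : hmax S (c + lam' *: e + M *: h) sm.
  apply/Hface => //; split => // y yS hy.
  apply: le_trans (proj2 wopt y yS hy) _.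
  by rewrite !dotvDl !dotvZl; lra.
have [w' [w'S hw' cw' Ew' [g' ex']]] :=
  improve (h := c + lam' *: e + M *: h) (f := c) wS ((Hface w wS).2 wopt) gw smS smface csm.
have fw' := (Hface w' w'S).1 hw'.
exists w', lam'; split => //; first by exists g'.
split => //.
have E1 := proj2 fw' w wS hw.
have E2 := proj2 wopt w' w'S (proj1 fw').
move: E1 E2; rewrite !dotvDl !dotvZl => E1 E2.
have : lam' * (dotv e w' - dotv e w) < 0 by lra.
by rewrite pmulr_rlt0 // subr_lt0.
Qed.

Lemma descend S h c e :
  (forall s s', s \in S -> s' \in S -> dotv e s' < dotv e s -> dotv e s' + 1 <= dotv e s) ->
  forall (N : nat) w g lam, w \in S -> expo S g w -> fmax S h (dotv (c + lam *: e)) w -> 0 < lam ->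
  (forall s, s \in S -> hmax S h s -> dotv e w - dotv e s <= N%:R) ->
  exists q, [/\ c_monotone_path (conv_hull S) c (w :: q), (exists g', expo S g' (last w q)),
     fmax S h (dotv c) (last w q) & (size q <= N)%N].
Proof.
move=> Hint; elim=> [|N IH] w g lam wS gw wopt lam0 HN;
  (case: (classic (exists s, [/\ s \in S, hmax S h s & dotv c w < dotv c s])) => [ex|nex];
  [| exists [::]; split => //=; [by exists g | split; first exact: wopt.1;
     move=> y yS hy; rewrite leNgt; apply/negP => lt; apply: nex; by exists y]]).
- have [w' [lam' [w'S [g' gw'] w'opt _ [_ _ ew']]]] := step wS gw wopt lam0 ex.
  have := Hint _ _ wS w'S ew'.
  have := HN w' w'S (proj1 w'opt); lra.
- have [w' [lam' [w'S [g' gw'] w'opt lam'0 [E cw ew']]]] := step wS gw wopt lam0 ex.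
  have := Hint _ _ wS w'S ew' => ew1.
  have HN' : forall s, s \in S -> hmax S h s -> dotv e w' - dotv e s <= N%:R.
    by move=> s sS hs; have := HN s sS hs; rewrite -natr1; lra.
  have [q [Hq Hv Hopt Hs]] := IH w' g' lam' w'S gw' w'opt lam'0 HN'.
  exists (w' :: q); split => //=; exact: path_cons.
Qed.
End Descend.


Section Gen.
Variables (R : realFieldType) (n : nat).
Implicit Types (c f g h x y u w v : 'rV[R]_n) (X S : seq 'rV[R]_n).

Lemma combine_face S h (F G : 'rV[R]_n -> R) : exists M, 0 < M /\ forall x, x \in S -> hmax S h x ->
 ((forall y, y \in S -> hmax S h y -> G y + M * F y <= G x + M * F x) <->
  ((forall y, y \in S -> hmax S h y -> F y <= F x) /\
    forall y, y \in S -> hmax S h y -> (forall z, z \in S -> hmax S h z -> F z <= F y) -> G y <= G x)).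
Proof.
pose hm y := all (fun z => dotv h z <= dotv h y) S.
have hmP y : reflect (hmax S h y) (hm y) by apply: allP.
pose X := [seq y <- S | hm y].
have memX y : (y \in X) = (y \in S) && hm y by rewrite mem_filter andbC.
have [M [M0 HM]] := combine X F G.
exists M; split => // x xS hx.
have xX : x \in X by rewrite memX xS; apply/hmP.
have := HM x xX; case=> H1 H2; split.
- move=> H; have [] := H1.
    by move=> y; rewrite memX => /andP[yS /hmP hy]; apply: H.
  move=> A B; split; first by move=> y yS hy; apply: A; rewrite memX yS; apply/hmP.
  move=> y yS hy Hy; apply: B; first by rewrite memX yS; apply/hmP.
  by move=> z; rewrite memX => /andP[zS /hmP hz]; apply: Hy.
- move=> [A B] y yS hy; apply: H2; last by rewrite memX yS; apply/hmP.
  split; first by move=> z; rewrite memX => /andP[zS /hmP hz]; apply: A.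
  move=> z; rewrite memX => /andP[zS /hmP hz] Hz; apply: B => // z' z'S hz'.
  by apply: Hz; rewrite memX z'S; apply/hmP.
Qed.

Variables (S : seq 'rV[R]_n) (e : 'I_n -> 'rV[R]_n).

Fixpoint lexok (L : seq 'I_n) h v (r : nat) : Prop :=
  match L with
  | [::] => r = 0%N /\ hmax S h v /\ (forall s, s \in S -> hmax S h s -> s = v)
  | i :: L' => exists h', (forall x, x \in S -> (hmax S h' x <-> fmax S h (dotv (e i)) x)) /\
     (((forall x y, x \in S -> y \in S -> hmax S h x -> hmax S h y -> dotv (e i) x = dotv (e i) y)
        /\ lexok L' h' v r)
      \/ (~ (forall x y, x \in S -> y \in S -> hmax S h x -> hmax S h y -> dotv (e i) x = dotv (e i) y)
        /\ exists r', r = r'.+1 /\ lexok L' h' v r'))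
  end.

Variables (k : nat) (v g0 : 'rV[R]_n).
Hypotheses (vS : v \in S) (gv : expo S g0 v)
  (Hint : forall i s s', s \in S -> s' \in S -> dotv (e i) s' < dotv (e i) s -> dotv (e i) s' + 1 <= dotv (e i) s)
  (Hrange : forall i s s', s \in S -> s' \in S -> dotv (e i) s - dotv (e i) s' <= k%:R).

Lemma gen L : forall h r, lexok L h v r -> forall c, exists q,
  [/\ c_monotone_path (conv_hull S) c (v :: q), (exists g, expo S g (last v q)),
      fmax S h (dotv c) (last v q) & (size q <= r * k)%N].
Proof.
elim: L => [|i L IH] h r /=.
  move=> [-> [hv Hv]] c; exists [::]; split => //; first by exists g0.
  by split => // y yS hy; rewrite (Hv y yS hy).
move=> [h' [Hh' [[Hconst Hok]|[Hnc [r' [-> Hok]]]]]] c.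
- have [q [Hq Hv Hopt Hs]] := IH h' r Hok c.
  exists q; split => //.
  have lS : last v q \in S by case: Hv => g [].
  have [hl _] := (Hh' _ lS).1 (proj1 Hopt).
  case: Hopt => _ Ho.
  split => // y yS hy; apply: Ho => //; apply/(Hh' y yS); split => //.
  by move=> z zS hz; rewrite (Hconst z y).
- have [q1 [Hq1 [g1 Hv1] Hopt1 Hs1]] := IH h' r' Hok c.
  set w1 := last v q1 in Hq1 Hv1 Hopt1.
  have w1S : w1 \in S by case: Hv1.
  have [hw1 Hw1] := (Hh' _ w1S).1 (proj1 Hopt1).
  have [M [M0 HM]] := combine_face S h (dotv (e i)) (dotv c).
  have w1opt : fmax S h (dotv (c + M *: e i)) w1.
    have H : forall y, y \in S -> hmax S h y ->
        dotv c y + M * dotv (e i) y <= dotv c w1 + M * dotv (e i) w1.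
      apply/(HM w1 w1S hw1); split => //.
      case: Hopt1 => _ Ho; move=> y' y'S hy' Hy'; apply: Ho => //.
      by apply/(Hh' y' y'S).
    by split => // y yS hy; rewrite !dotvDl !dotvZl; apply: H.
  have HN : forall s, s \in S -> hmax S h s -> dotv (e i) w1 - dotv (e i) s <= k%:R.
    by move=> s sS _; apply: Hrange.
  have [q2 [Hq2 Hv2 Hopt2 Hs2]] := @descend _ _ S h c (e i) (@Hint i) k w1 g1 M w1S Hv1 w1opt M0 HN.
  exists (q1 ++ q2); rewrite last_cat; split => //.
    exact: path_cat.
  by rewrite size_cat mulSn addnC leq_add.
Qed.

End Gen.


Section Dim.
Variables (R : realFieldType) (n : nat).
Variables (S : seq 'rV[R]_n) (e : 'I_n -> 'rV[R]_n) (v : 'rV[R]_n).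
Hypothesis vS : v \in S.

Lemma lexok_hv L h r : lexok S e L h v r -> hmax S h v.
Proof.
elim: L h r => [|i L IH] h r /=; first by case=> _ [].
move=> [h' [Hh' H]].
have hv' : hmax S h' v by case: H => [[_ /IH]|[_ [r' [_ /IH]]]].
by have [] := (Hh' v vS).1 hv'.
Qed.

Lemma lexok_family L h r : lexok S e L h v r ->
  exists y : 'I_r -> 'rV[R]_n, [/\ forall j, y j \in S, forall j, hmax S h (y j) &
    forall a : 'I_r -> R, \sum_j a j *: (y j - v) = 0 -> forall j, a j = 0].
Proof.
elim: L h r => [|i L IH] h r /=.
  move=> [-> _]; exists (fun j => v); split=> [j|j|a _ j]; by case: j.
move=> [h' [Hh' [[Hc Hok]|[Hnc [r' [-> Hok]]]]]].
  have [y [yS yh yk]] := IH h' r Hok.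
  exists y; split => // j; by have [] := (Hh' (y j) (yS j)).1 (yh j).
have [y [yS yh yk]] := IH h' r' Hok.
have hv' := lexok_hv Hok.
have [hv Hv] := (Hh' v vS).1 hv'.
have [y0 [y0S hy0 ey0]] : exists y0, [/\ y0 \in S, hmax S h y0 & dotv (e i) y0 != dotv (e i) v].
  apply: NNPP => N; apply: Hnc => x z xS zS hx hz.
  have ex : dotv (e i) x = dotv (e i) v.
    by apply: NNPP => ne; apply: N; exists x; split => //; apply/eqP.
  have ez : dotv (e i) z = dotv (e i) v.
    by apply: NNPP => ne; apply: N; exists z; split => //; apply/eqP.
  by rewrite ex ez.
have ey j : dotv (e i) (y j) = dotv (e i) v.
  have [hyj Hyj] := (Hh' (y j) (yS j)).1 (yh j).
  by apply/eqP; rewrite eq_le Hv ?Hyj.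
pose Y (j : 'I_r'.+1) := if unlift ord0 j is Some j' then y j' else y0.
have Y0 : Y ord0 = y0 by rewrite /Y unlift_none.
have YS (j : 'I_r') : Y (lift ord0 j) = y j by rewrite /Y liftK.
exists Y; split.
- by move=> j; rewrite /Y; case: unlift.
- move=> j; rewrite /Y; case: unlift => [j'|//].
  by have [] := (Hh' (y j') (yS j')).1 (yh j').
- move=> a Ha.
  have a0 : a ord0 = 0.
    have := congr1 (dotv (e i)) Ha.
    rewrite dotv0r dotv_sumr big_ord_recl big1 ?addr0.
      rewrite dotvZr Y0 dotvBr => /eqP; rewrite mulf_eq0 subr_eq0 (negbTE ey0) orbF.
      by move/eqP.
    by move=> j _; rewrite YS dotvZr dotvBr ey subrr mulr0.
  have rest : \sum_(j < r') a (lift ord0 j) *: (y j - v) = 0.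
    by move: Ha; rewrite big_ord_recl a0 scale0r add0r; under eq_bigr do rewrite YS.
  move=> j; case: (unliftP ord0 j) => [j' ->|->] //.
  exact: (yk (fun j => a (lift ord0 j)) rest).
Qed.

Lemma dim_bound d L h r : polytope_dim (conv_hull S) d -> lexok S e L h v r -> (r <= d)%N.
Proof.
move=> [_ Hd] Hok; rewrite leqNgt; apply/negP => rd.
have [y [yS _ yk]] := lexok_family Hok.
pose z (j : 'I_d.+1) := y (widen_ord rd j).
pose p (j : 'I_d.+2) := if unlift ord0 j is Some j' then z j' else v.
have Hp : forall j, conv_hull S (p j).
  move=> j; rewrite /p; case: (unlift ord0 j) => [j'|]; apply: mem_conv => //.
  exact: yS.
move/negP: (Hd p Hp); apply.
apply: inj_row_free => a Ha; apply/rowP => j0; rewrite mxE.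
have E : \sum_j a 0 j *: (z j - v) = 0.
  apply/rowP => l; move/rowP: Ha => /(_ l); rewrite !mxE summxE.
  move=> H; rewrite -[RHS]H; apply: eq_bigr => j _.
  by rewrite !mxE /p liftK unlift_none.
pose b (j : 'I_r) := if (j <= d)%N then a 0 (inord j) else 0.
have Eb : \sum_j b j *: (y j - v) = 0.
  rewrite -[RHS]E (big_ord_widen_leq r (fun _ => true) (fun j => a 0 j *: (z j - v)) rd).
  rewrite [RHS]big_mkcond /=; apply: eq_bigr => j _; rewrite /b.
  case: ifP => jd; last by rewrite scale0r.
  congr (_ *: (_ - _)); rewrite /z; congr y; apply: val_inj => /=.
  by rewrite inordK.
have := yk b Eb (widen_ord rd j0); rewrite /b /= -ltnS ltn_ord.
by rewrite inord_val.
Qed.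
End Dim.


Section Lex.
Variables (R : realFieldType) (n k : nat) (S : seq 'rV[R]_n).
Variables (s : {perm 'I_n}) (sg : 'I_n -> bool) (alpha : R).
Hypothesis HS : lattice_in_box k S.
Hypothesis Halpha : (2 * k + 1)%:R <= alpha.

Definition esg (i : 'I_n) : 'rV[R]_n := ev i ((-1) ^+ sg i).

Lemma dotv_esg i x : dotv (esg i) x = (-1) ^+ sg i * x 0 i.
Proof. by rewrite /esg dotv_ev. Qed.

Lemma esg_int i x y : x \in S -> y \in S -> dotv (esg i) y < dotv (esg i) x ->
  dotv (esg i) y + 1 <= dotv (esg i) x.
Proof.
move=> xS yS; rewrite !dotv_esg.
have [a [ak ->]] := HS xS i; have [b [bk ->]] := HS yS i.
case: (sg i); rewrite /= ?expr1 ?expr0 ?mulN1r ?mul1r => H.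
- have ab : (a < b)%N by rewrite -(ltr_nat R); lra.
  have : ((a.+1)%:R : R) <= b%:R by rewrite ler_nat.
  rewrite -natr1; lra.
- have ab : (b < a)%N by rewrite -(ltr_nat R); lra.
  have : ((b.+1)%:R : R) <= a%:R by rewrite ler_nat.
  rewrite -natr1; lra.
Qed.

Lemma esg_range i x y : x \in S -> y \in S -> dotv (esg i) x - dotv (esg i) y <= k%:R.
Proof.
move=> xS yS; rewrite !dotv_esg.
have [a [ak ->]] := HS xS i; have [b [bk ->]] := HS yS i.
have := ler0n R a; have := ler0n R b.
have : (a%:R : R) <= k%:R by rewrite ler_nat.
have : (b%:R : R) <= k%:R by rewrite ler_nat.
case: (sg i); rewrite /= ?expr1 ?expr0 ?mulN1r ?mul1r; lra.
Qed.

Lemma geom j : 2 * k%:R * (\sum_(t < j) alpha ^+ t.+1) + alpha <= alpha ^+ j.+1.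
Proof.
have a1 : 1 <= alpha by apply: le_trans Halpha; rewrite ler1n addn1.
elim: j => [|j IH]; first by rewrite big_ord0 mulr0 add0r expr1.
rewrite big_ord_recr /= mulrDr.
have : (2 * k + 1)%:R * alpha ^+ j.+1 <= alpha * alpha ^+ j.+1.
  by apply: ler_wpM2r => //; apply: exprn_ge0; lra.
rewrite -exprS natrD natrM => H.
lra.
Qed.

Lemma lex_step (v y : 'rV[R]_n) (j : nat) (i : 'I_n) :
  v \in S -> y \in S -> s i = j :> nat ->
  (forall l, (j < s l)%N -> y 0 l = v 0 l) ->
  dotv (esg i) v < dotv (esg i) y ->
  dotv (xsigma alpha s sg) v < dotv (xsigma alpha s sg) y.
Proof.
move=> vS yS si Hy lt.
have a0 : 0 < alpha by apply: lt_le_trans Halpha; rewrite ltr0n addn1.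
rewrite -subr_gt0 -dotvBr.
pose T l := alpha ^+ (s l).+1 * (dotv (esg l) y - dotv (esg l) v).
have ET : dotv (xsigma alpha s sg) (y - v) = \sum_l T l.
  apply: eq_bigr => l _; rewrite /T !mxE !dotv_esg; ring.
pose B (l : 'I_n) := (if s l == j :> nat then alpha ^+ j.+1 else 0) -
   (if (s l < j)%N then k%:R * alpha ^+ (s l).+1 else 0).
have TB l : B l <= T l.
  rewrite /B /T; case: (ltngtP (s l) j) => H.
  - have := esg_range l vS yS; have : 0 <= alpha ^+ (s l).+1 by apply: exprn_ge0; lra.
    move=> p r.
    have : alpha ^+ (s l).+1 * (- k%:R) <= alpha ^+ (s l).+1 * (dotv (esg l) y - dotv (esg l) v).
      by apply: ler_wpM2l => //; lra.
    rewrite mulrN; lra.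
  - by rewrite subr0 !dotv_esg (Hy l H) subrr mulr0.
  - have li : l = i by apply: (@perm_inj _ s); apply: val_inj; rewrite /= H si.
    rewrite subr0 H li.
    have := esg_int yS vS lt => H1.
    rewrite -{1}(mulr1 (alpha ^+ j.+1)); apply: ler_wpM2l; first by apply: exprn_ge0; lra.
    lra.
rewrite ET; apply: lt_le_trans (ler_sum _ (fun l _ => TB l)).
rewrite /B sumrB.
have E1 : \sum_l (if s l == j :> nat then alpha ^+ j.+1 else 0) = alpha ^+ j.+1.
  rewrite (bigD1 i) //= si eqxx big1 ?addr0 // => l li.
  case: eqP => // E; exfalso; move/eqP: li; apply.
  by apply: (@perm_inj _ s); apply: val_inj; rewrite /= E si.
have jn : (j <= n)%N by rewrite -si ltnW.
have E2 : \sum_l (if (s l < j)%N then k%:R * alpha ^+ (s l).+1 else 0) =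
    k%:R * \sum_(t < j) alpha ^+ t.+1.
  rewrite (reindex_inj (@perm_inj _ s^-1)) /=.
  under eq_bigr do rewrite permKV.
  rewrite mulr_sumr (big_ord_widen n (fun t => k%:R * alpha ^+ t.+1) jn).
  by rewrite [RHS]big_mkcond.
rewrite E1 E2.
have := geom j.
have : 0 <= k%:R * \sum_(t < j) alpha ^+ t.+1.
  by apply: mulr_ge0 => //; apply: sumr_ge0 => t _; apply: exprn_ge0; lra.
set A := \sum_(t < j) alpha ^+ t.+1.
move=> H1 H2; rewrite subr_gt0.
have : 2 * (k%:R * A) + alpha <= alpha ^+ j.+1 by rewrite mulrA.
lra.
Qed.

End Lex.


Section Final.
Variables (R : realFieldType) (n k : nat) (S : seq 'rV[R]_n).
Variables (s : {perm 'I_n}) (sg : 'I_n -> bool) (alpha : R) (v : 'rV[R]_n).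
Hypothesis HS : lattice_in_box k S.
Hypothesis Halpha : (2 * k + 1)%:R <= alpha.
Hypothesis vS : v \in S.
Hypothesis Hsig : forall y, y \in S -> dotv (xsigma alpha s sg) y <= dotv (xsigma alpha s sg) v.

Lemma lexok_exists j : (j <= n)%N -> forall h, hmax S h v ->
  (forall y, y \in S -> hmax S h y -> forall l, (j <= s l)%N -> y 0 l = v 0 l) ->
  exists L r, lexok S (esg R sg) L h v r.
Proof.
elim: j => [|j IH] jn h hv H.
  exists [::], 0%N; split => //; split => // y yS hy; apply/rowP => l.
  exact: H.
pose i := (s^-1)%g (Ordinal jn).
have si : s i = j :> nat by rewrite /i permKV.
have [M [M0 HM]] := combinev S h (esg R sg i).
pose h' := esg R sg i + M *: h.
have Hh' x : x \in S -> hmax S h' x <-> fmax S h (dotv (esg R sg i)) x.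
  exact: HM.
have vmax : fmax S h (dotv (esg R sg i)) v.
  split => // y yS hy; rewrite leNgt; apply/negP => lt.
  have := lex_step HS Halpha vS yS si (fun l Hl => H y yS hy l Hl) lt.
  by have := Hsig yS; lra.
have Hinv : forall y, y \in S -> hmax S h' y -> forall l, (j <= s l)%N -> y 0 l = v 0 l.
  move=> y yS hy l Hl.
  have [hy1 Hy1] := (Hh' y yS).1 hy.
  move: Hl; rewrite leq_eqVlt => /orP[/eqP Hl|Hl]; last exact: H.
  have li : l = i by apply: (@perm_inj _ s); apply: val_inj; rewrite /= -Hl si.
  have E : dotv (esg R sg i) y = dotv (esg R sg i) v.
    by apply/eqP; rewrite eq_le (Hy1 v vS hv) (vmax.2 y yS hy1).
  move: E; rewrite li !dotv_esg; case: (sg i) => /=;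
    rewrite ?expr1 ?expr0 ?mulN1r ?mul1r //; apply: oppr_inj.
have [L [r Hok]] := IH (ltnW jn) h' ((Hh' v vS).2 vmax) Hinv.
exists (i :: L).
case: (classic (forall x y, x \in S -> y \in S -> hmax S h x -> hmax S h y ->
   dotv (esg R sg i) x = dotv (esg R sg i) y)) => Hc.
  by exists r, h'; split => //; left.
by exists r.+1, h'; split => //; right; split => //; exists r.
Qed.

End Final.

Lemma dotv0l (R : realFieldType) (n : nat) (x : 'rV[R]_n) : dotv 0 x = 0.
Proof. by rewrite /dotv big1 // => i _; rewrite mxE mul0r. Qed.

Unset Implicit Arguments.

Theorem mainTheorem6 (R : realFieldType) (n k d : nat) (S : seq 'rV[R]_n)
  (s : {perm 'I_n}) (sg : 'I_n -> bool) (alpha : R) (v : 'rV[R]_n) :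
  lattice_in_box k S ->
  polytope_dim (conv_hull S) d ->
  (2 * k + 1)%:R <= alpha ->
  is_vertex (conv_hull S) v ->
  (forall x, conv_hull S x -> dotv (xsigma alpha s sg) x <= dotv (xsigma alpha s sg) v) ->
  forall c : 'rV[R]_n,
    exists q : seq 'rV[R]_n,
      c_monotone_path (conv_hull S) c (v :: q) /\
      is_vertex (conv_hull S) (last v q) /\
      (forall x, conv_hull S x -> dotv c x <= dotv c (last v q)) /\
      (size q <= d * k)%N.
Proof.
move=> HS Hdim Ha Hv Hsig c.
have [g0 gv] := vertex_expo Hv.
have vS : v \in S by case: gv.
have Hsig' : forall y, y \in S -> dotv (xsigma alpha s sg) y <= dotv (xsigma alpha s sg) v.
  by move=> y yS; apply: Hsig; apply: mem_conv.
have h0 : forall x, hmax S 0 x by move=> x y _; rewrite !dotv0l.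
have [L [r Hok]] := lexok_exists HS Ha vS Hsig' (leqnn n) (h0 v)
  (fun y _ _ l Hl => ltac:(by move: Hl; rewrite leqNgt ltn_ord)).
have [q [Hq [g Hl] Hopt Hs]] :=
  gen gv (fun i s1 s2 H1 H2 => @esg_int R n k S sg HS i s1 s2 H1 H2)
      (fun i s1 s2 H1 H2 => @esg_range R n k S sg HS i s1 s2 H1 H2) Hok c.
exists q; split => //; split; first exact: expo_vertex Hl.
split.
  move=> x Px; apply: conv_le Px => y yS.
  by case: Hopt => _ Ho; apply: Ho => //; apply: h0.
apply: leq_trans Hs _; apply: leq_mul => //.
exact: (@dim_bound R n S (esg R sg) v vS d L 0 r Hdim Hok).
Qed.
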